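(* Let $\mathcal A$ be a unital algebra with unit $\mathbf 1$ and $(\mathbf R_n)_{n\in\mathbb Z}$ invertible elements satisfying, for all $n\in\mathbb Z$, $$\mathbf R_{2n}\mathbf R_{2n-1}^{-1}\mathbf R_{2n-2}\mathbf R_{2n-1}=\mathbf 1+\mathbf R_{2n-1},\qquad \mathbf R_{2n+1}\mathbf R_{2n}^{-1}\mathbf R_{2n-1}\mathbf R_{2n}=\mathbf 1+\mathbf R_{2n}^4 .$$ Then for all $n,i\in\mathbb Z$, $\mathbf R_n$ is a positive Laurent polynomial of the initial data $\mathbf x_i=(\mathbf R_i,\mathbf R_{i+1})$: there is a finite sum, with non-negative integer coefficients, of words in $X^{\pm1},Y^{\pm1}$ (depending only on $n,i$, not on $\mathcal A$ or the particular solution) which evaluates to $\mathbf R_n$ at $X=\mathbf R_i$, $Y=\mathbf R_{i+1}$. *)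

(* Defs.v *)
From HB Require Import structures.
From mathcomp Require Import all_boot all_order all_algebra.
Set Implicit Arguments. Unset Strict Implicit. Unset Printing Implicit Defensive.
Import Order.TTheory GRing.Theory Num.Theory.

Inductive letter := LX | LXinv | LY | LYinv.

Definition word := seq letter.

(* A positive noncommutative Laurent polynomial in X, Y: a finite formal sum
   of words, each with a non-negative integer coefficient. *)
Definition posLaurent := seq (nat * word).

Section Eval.
Variable A : unitRingType.

Definition eval_letter (x y : A) (l : letter) : A :=
  match l with
  | LX => x | LXinv => x^-1 | LY => y | LYinv => y^-1
  end.

Definition eval_word (x y : A) (w : word) : A :=
  (\prod_(l <- w) eval_letter x y l)%R.

Definition eval_posLaurent (x y : A) (P : posLaurent) : A :=
  (\sum_(c <- P) eval_word x y c.2 *+ c.1)%R.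
End Eval.

(* Main.v *)
Require Import Defs.
From HB Require Import structures.
From mathcomp Require Import all_boot all_order all_algebra.
Import GRing.Theory.
Local Open Scope ring_scope.
Inductive nt := NAtom of nat | NInv of nat | NPlain of nat | NOne | NZero
  | NAdd of nt & nt | NMul of nt & nt | NOpp of nt.

Definition mon := seq (nat * nat).
Definition npoly := seq (int * mon).

Fixpoint nred (w : mon) : mon :=
  match w with
  | [::] => [::]
  | l :: w' => let r := nred w' in
      match r with
      | l' :: r' => if (l.1 == l'.1) && (((l.2 == 1) && (l'.2 == 2)) || ((l.2 == 2) && (l'.2 == 1)))%N then r' else l :: r
      | [::] => [:: l]
      end
  end.

Fixpoint nmul (p1 p2 : npoly) : npoly :=
  match p1 with
  | [::] => [::]
  | c :: p => [seq (c.1 * c2.1, nred (c.2 ++ c2.2)) | c2 <- p2] ++ nmul p p2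
  end.

Fixpoint norm (t : nt) : npoly :=
  match t with
  | NAtom i => [:: (1, [:: (i, 1%N)])]
  | NInv i => [:: (1, [:: (i, 2%N)])]
  | NPlain i => [:: (1, [:: (i, 0%N)])]
  | NOne => [:: (1, [::])]
  | NZero => [::]
  | NAdd t1 t2 => norm t1 ++ norm t2
  | NMul t1 t2 => nmul (norm t1) (norm t2)
  | NOpp t1 => [seq (- c.1, c.2) | c <- norm t1]
  end.

Fixpoint ins (c : int * mon) (p : npoly) : npoly :=
  match p with
  | [::] => [:: c]
  | c' :: p' => if c'.2 == c.2 then (c'.1 + c.1, c'.2) :: p' else c' :: ins c p'
  end.
Definition collect (p : npoly) : npoly := foldr ins [::] p.
Definition iszero (p : npoly) : bool := all (fun c => c.1 == 0) (collect p).

Section NC.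
Variables (A : unitRingType) (env env2 : seq A).
Hypothesis Henv : all (fun x => x \is a GRing.unit) env.

Definition dl (l : nat * nat) : A :=
  match l.2 with 0 => nth 0 env2 l.1 | 1 => nth 1 env l.1 | _ => (nth 1 env l.1)^-1 end.
Definition dm (m : mon) : A := \prod_(l <- m) dl l.
Definition dp (p : npoly) : A := \sum_(c <- p) dm c.2 *~ c.1.

Fixpoint den (t : nt) : A :=
  match t with
  | NAtom i => nth 1 env i
  | NInv i => (nth 1 env i)^-1
  | NPlain i => nth 0 env2 i
  | NOne => 1
  | NZero => 0
  | NAdd t1 t2 => den t1 + den t2
  | NMul t1 t2 => den t1 * den t2
  | NOpp t1 => - den t1
  end.

Lemma unit_nth i : nth 1 env i \is a GRing.unit.
Proof.
have [Hi|Hi] := ltnP i (size env).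
  by apply: (allP Henv); rewrite mem_nth.
by rewrite nth_default // unitr1.
Qed.

Lemma dm_cons l m : dm (l :: m) = dl l * dm m.
Proof. by rewrite /dm big_cons. Qed.
Lemma dm_nil : dm [::] = 1.
Proof. by rewrite /dm big_nil. Qed.
Lemma dm_cat m1 m2 : dm (m1 ++ m2) = dm m1 * dm m2.
Proof. by rewrite /dm big_cat. Qed.

Lemma dl_pair l l' : l.1 = l'.1 ->
  (((l.2 == 1) && (l'.2 == 2)) || ((l.2 == 2) && (l'.2 == 1)))%N -> dl l * dl l' = 1.
Proof.
case: l => i b; case: l' => j b' /= <-.
have ui := unit_nth i.
by case/orP => /andP [/eqP -> /eqP ->]; rewrite /dl /= ?mulVr ?mulrV.
Qed.

Lemma dm_nred m : dm (nred m) = dm m.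
Proof.
elim: m => //= l m IH.
case E: (nred m) => [|l' r'].
  by rewrite [RHS]dm_cons -IH E dm_cons.
case: ifP => H.
  case/andP: H => /eqP H1 H2.
  by rewrite [RHS]dm_cons -IH E dm_cons mulrA dl_pair // mul1r.
by rewrite [RHS]dm_cons -IH E dm_cons.
Qed.

Lemma dp_cat p1 p2 : dp (p1 ++ p2) = dp p1 + dp p2.
Proof. by rewrite /dp big_cat. Qed.
Lemma dp_cons c p : dp (c :: p) = dm c.2 *~ c.1 + dp p.
Proof. by rewrite /dp big_cons. Qed.
Lemma dp_nil : dp [::] = 0.
Proof. by rewrite /dp big_nil. Qed.

Lemma dp_nmul p1 p2 : dp (nmul p1 p2) = dp p1 * dp p2.
Proof.
elim: p1 => [|c p IH] /=; first by rewrite dp_nil mul0r.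
rewrite dp_cat IH dp_cons mulrDl; congr (_ + _).
clear IH; elim: p2 => [|c2 p2 IH2] /=; first by rewrite dp_nil mulr0.
rewrite !dp_cons IH2 mulrDr; congr (_ + _).
by rewrite dm_nred dm_cat mulrzAl mulrzAr -mulrzA mulrC.
Qed.

Lemma norm_ok t : dp (norm t) = den t.
Proof.
elim: t => [i|i|i|||t1 IH1 t2 IH2|t1 IH1 t2 IH2|t1 IH1] /=.
- by rewrite dp_cons dp_nil addr0 dm_cons dm_nil mulr1.
- by rewrite dp_cons dp_nil addr0 dm_cons dm_nil mulr1.
- by rewrite dp_cons dp_nil addr0 dm_cons dm_nil mulr1.
- by rewrite dp_cons dp_nil addr0 dm_nil.
- by rewrite dp_nil.
- by rewrite dp_cat IH1 IH2.
- by rewrite dp_nmul IH1 IH2.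
- rewrite -IH1; elim: (norm t1) => [|c p IHp] /=; first by rewrite !dp_nil oppr0.
  by rewrite !dp_cons IHp opprD mulrNz.
Qed.

Lemma dp_ins c p : dp (ins c p) = dm c.2 *~ c.1 + dp p.
Proof.
elim: p => [|c' p IH] /=; first by rewrite dp_cons.
case: eqP => E.
  by rewrite !dp_cons /= mulrzDr E addrCA addrA.
by rewrite !dp_cons IH addrCA.
Qed.

Lemma dp_collect p : dp (collect p) = dp p.
Proof.
elim: p => [|c p IH] //=.
by rewrite dp_ins IH dp_cons.
Qed.

Lemma iszero_ok p : iszero p -> dp p = 0.
Proof.
rewrite /iszero -dp_collect; elim: (collect p) => [|c q IH] /=; first by rewrite dp_nil.
by case/andP => /eqP H1 /IH H2; rewrite dp_cons H1 mulr0z H2 addr0.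
Qed.

Lemma nc_eq t1 t2 : iszero (norm (NAdd t1 (NOpp t2))) -> den t1 = den t2.
Proof. by move/iszero_ok; rewrite norm_ok /= => /eqP; rewrite subr_eq0 => /eqP. Qed.
End NC.


Ltac add_atom x l :=
  lazymatch l with
  | context [ cons x _ ] => l
  | _ => constr:(cons x l)
  end.
Ltac idx x l :=
  lazymatch l with
  | cons x _ => constr:(0%N)
  | cons _ ?l' => let n := idx x l' in constr:(S n)
  end.
Ltac invatoms t l :=
  lazymatch t with
  | @Algebra.add _ ?x ?y => let l := invatoms x l in invatoms y l
  | @GRing.mul _ ?x ?y => let l := invatoms x l in invatoms y l
  | @Algebra.opp _ ?x => invatoms x l
  | @GRing.inv _ ?x => add_atom x l
  | @GRing.exp _ ?x _ => invatoms x l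
  | @Algebra.natmul _ ?x _ => invatoms x l
  | _ => l
  end.
Ltac plainatoms t u l :=
  lazymatch t with
  | @Algebra.add _ ?x ?y => let l := plainatoms x u l in plainatoms y u l
  | @GRing.mul _ ?x ?y => let l := plainatoms x u l in plainatoms y u l
  | @Algebra.opp _ ?x => plainatoms x u l
  | @GRing.inv _ ?x => l
  | @GRing.one _ => l
  | @Algebra.zero _ => l
  | @GRing.exp _ ?x _ => plainatoms x u l
  | @Algebra.natmul _ ?x _ => plainatoms x u l
  | _ => lazymatch u with
         | context [ cons t _ ] => l
         | _ => add_atom t l
         end
  end.
Ltac reify_atom t u p :=
  lazymatch u with
  | context [ cons t _ ] => let i := idx t u in constr:(NAtom i)
  | _ => let i := idx t p in constr:(NPlain i)
  end.
Ltac reify_exp x n u p :=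
  lazymatch n with
  | O => constr:(NOne)
  | S O => reify_atom x u p
  | S ?m => let a := reify_atom x u p in let r := reify_exp x m u p in constr:(NMul a r)
  end.
Ltac reify_nm x n u p :=
  lazymatch n with
  | O => constr:(NZero)
  | S O => reify x u p
  | S ?m => let a := reify x u p in let r := reify_nm x m u p in constr:(NAdd a r)
  end
with reify t u p :=
  lazymatch t with
  | @Algebra.add _ ?x ?y => let a := reify x u p in let b := reify y u p in constr:(NAdd a b)
  | @GRing.mul _ ?x ?y => let a := reify x u p in let b := reify y u p in constr:(NMul a b)
  | @Algebra.opp _ ?x => let a := reify x u p in constr:(NOpp a)
  | @GRing.inv _ ?x => let i := idx x u in constr:(NInv i)
  | @GRing.one _ => constr:(NOne)
  | @Algebra.zero _ => constr:(NZero)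
  | @GRing.exp _ ?x ?n => reify_exp x n u p
  | @Algebra.natmul _ ?x ?n => reify_nm x n u p
  | _ => reify_atom t u p
  end.
Ltac nc_ring :=
  lazymatch goal with
  | |- @eq ?T ?X ?Y =>
    let l0 := constr:(@nil T) in
    let u1 := invatoms X l0 in
    let u := invatoms Y u1 in
    let p1 := plainatoms X u l0 in
    let p := plainatoms Y u p1 in
    let tX := reify X u p in
    let tY := reify Y u p in
    apply: (@nc_eq _ u p _ tX tY);
    [ rewrite /=; do ? (apply/andP; split); try exact: isT; try assumption
    | by vm_compute ]
  end.

Definition letter_eqb (a b : letter) : bool :=
  match a, b with
  | LX, LX | LXinv, LXinv | LY, LY | LYinv, LYinv => true
  | _, _ => false end.
Lemma letter_eqP : Equality.axiom letter_eqb.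
Proof. by case; case; constructor. Qed.
HB.instance Definition _ := hasDecEq.Build letter letter_eqP.

Definition inv_pair (a b : letter) : bool :=
  match a, b with
  | LX, LXinv | LXinv, LX | LY, LYinv | LYinv, LY => true
  | _, _ => false end.

Fixpoint red (w : word) : word :=
  match w with
  | [::] => [::]
  | l :: w' => let r := red w' in
      match r with
      | l' :: r' => if inv_pair l l' then r' else l :: r
      | [::] => [:: l]
      end
  end.

Definition padd (P1 P2 : posLaurent) : posLaurent := P1 ++ P2.
Fixpoint pmul (P1 P2 : posLaurent) : posLaurent :=
  match P1 with
  | [::] => [::]
  | c :: P => [seq ((c.1 * c2.1)%N, c.2 ++ c2.2) | c2 <- P2] ++ pmul P P2
  end.
Definition nf (P : posLaurent) : seq word :=
  flatten [seq nseq c.1 (red c.2) | c <- P].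
Definition pw (w : word) : posLaurent := [:: (1%N, w)].

Section EvalLemmas.
Variables (A : unitRingType) (x y : A).
Hypotheses (ux : x \is a GRing.unit) (uy : y \is a GRing.unit).
Local Notation ev := (eval_posLaurent x y).
Local Notation ew := (eval_word x y).

Lemma ew_cons l w : ew (l :: w) = eval_letter x y l * ew w.
Proof. by rewrite /eval_word big_cons. Qed.
Lemma ew_nil : ew [::] = 1.
Proof. by rewrite /eval_word big_nil. Qed.
Lemma ew_cat w1 w2 : ew (w1 ++ w2) = ew w1 * ew w2.
Proof. by rewrite /eval_word big_cat. Qed.

Lemma ew_red w : ew (red w) = ew w.
Proof.
elim: w => //= l w IH.
case E: (red w) => [|l' r'].
  by rewrite [RHS]ew_cons -IH E ew_cons.
case: ifP => H.
  rewrite [RHS]ew_cons -IH E ew_cons mulrA.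
  by clear E; case: l H; case: l' => //= _; rewrite ?(mulrV ux) ?(mulrV uy) ?(mulVr ux) ?(mulVr uy) mul1r.
by rewrite [RHS]ew_cons -IH E ew_cons.
Qed.

Lemma ev_nil : ev [::] = 0.
Proof. by rewrite /eval_posLaurent big_nil. Qed.
Lemma ev_cons c P : ev (c :: P) = ew c.2 *+ c.1 + ev P.
Proof. by rewrite /eval_posLaurent big_cons. Qed.
Lemma ev_cat P1 P2 : ev (P1 ++ P2) = ev P1 + ev P2.
Proof. by rewrite /eval_posLaurent big_cat. Qed.
Lemma ev_padd P1 P2 : ev (padd P1 P2) = ev P1 + ev P2.
Proof. exact: ev_cat. Qed.
Lemma ev_pw w : ev (pw w) = ew w.
Proof. by rewrite /pw ev_cons ev_nil addr0. Qed.

Lemma ev_pmul P1 P2 : ev (pmul P1 P2) = ev P1 * ev P2.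
Proof.
elim: P1 => [|c P IH] /=; first by rewrite ev_nil mul0r.
rewrite ev_cat IH ev_cons mulrDl; congr (_ + _).
clear IH; elim: P2 => [|c2 P2 IH2] /=; first by rewrite ev_nil mulr0.
rewrite !ev_cons IH2 mulrDr; congr (_ + _).
by rewrite ew_cat mulrnAl mulrnAr -mulrnA mulnC.
Qed.

Lemma ev_nf P : ev P = \sum_(w <- nf P) ew w.
Proof.
elim: P => [|c P IH]; first by rewrite ev_nil /nf big_nil.
rewrite ev_cons IH /nf /= big_cat /=; congr (_ + _).
rewrite big_nseq ew_red; elim: c.1 => [|n IHn] //=.
by rewrite mulrS IHn.
Qed.

Lemma ev_perm P1 P2 : perm_eq (nf P1) (nf P2) -> ev P1 = ev P2.
Proof. by move=> H; rewrite !ev_nf; apply: perm_big. Qed.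
End EvalLemmas.
Definition aE : posLaurent := [:: (1%N, [:: LXinv; LXinv; LY])].
Definition dE : posLaurent := [:: (1%N, [:: LXinv; LYinv; LXinv; LY]);
  (1%N, [:: LYinv; LXinv; LXinv; LY]);
  (1%N, [:: LYinv; LXinv; LYinv; LXinv; LY]);
  (1%N, [:: LYinv; LX; LX; LX; LYinv; LXinv; LY])].
Definition cE : posLaurent := [:: (1%N, [:: LXinv; LXinv; LXinv; LXinv; LY]);
  (1%N, [:: LXinv; LXinv; LXinv; LYinv; LXinv; LY]);
  (1%N, [:: LXinv; LXinv; LY; LXinv; LYinv; LXinv; LY])].
Definition a2E : posLaurent := [:: (1%N, [:: LXinv; LY; LXinv])].
Definition d2E : posLaurent := [:: (1%N, [:: LXinv; LXinv]);
  (1%N, [:: LYinv; LXinv; LXinv]);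
  (1%N, [:: LYinv; LXinv; LY; LXinv]);
  (1%N, [:: LYinv; LX; LX])].
Definition c2E : posLaurent := [:: (1%N, [:: LXinv; LXinv; LXinv; LY; LXinv]);
  (1%N, [:: LYinv; LXinv; LXinv; LXinv; LY; LXinv]);
  (1%N, [:: LYinv; LXinv; LY; LXinv; LXinv; LY; LXinv])].
Definition gE : posLaurent := [:: (1%N, [:: LXinv; LXinv; LXinv; LY; LXinv]);
  (1%N, [:: LYinv; LXinv; LXinv; LXinv; LY; LXinv]);
  (1%N, [:: LYinv; LXinv; LY; LXinv; LXinv; LY; LXinv])].
Definition z0E : posLaurent := [:: (1%N, [:: LYinv; LXinv; LY])].
Definition z20E : posLaurent := [:: (1%N, [:: LYinv; LXinv; LY])].
Definition aO : posLaurent := [:: (1%N, [:: LY; LXinv; LY])].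
Definition dO : posLaurent := [:: (1%N, [:: LYinv; LYinv; LYinv; LXinv; LY]);
  (1%N, [:: LYinv; LYinv; LX; LYinv; LXinv; LY]);
  (1%N, [:: LYinv; LX; LYinv; LYinv; LXinv; LY]);
  (1%N, [:: LYinv; LX; LYinv; LX; LYinv; LXinv; LY])].
Definition cO : posLaurent := [:: (1%N, [:: LYinv; LXinv; LY]);
  (1%N, [:: LY; LXinv; LYinv; LYinv; LXinv; LY]);
  (1%N, [:: LY; LXinv; LYinv; LX; LYinv; LXinv; LY])].
Definition a2O : posLaurent := [:: (1%N, [:: LY; LY; LXinv])].
Definition d2O : posLaurent := [:: (1%N, [:: LYinv; LYinv]);
  (1%N, [:: LYinv; LYinv; LXinv]);
  (1%N, [:: LYinv; LX; LYinv]);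
  (1%N, [:: LYinv; LX; LYinv; LXinv])].
Definition c2O : posLaurent := [:: (1%N, [:: LXinv]);
  (1%N, [:: LYinv; LYinv; LXinv; LY; LY; LXinv]);
  (1%N, [:: LYinv; LX; LYinv; LXinv; LY; LY; LXinv])].
Definition gO : posLaurent := [:: (1%N, [:: LXinv]);
  (1%N, [:: LYinv; LYinv; LXinv; LY; LY; LXinv]);
  (1%N, [:: LYinv; LX; LYinv; LXinv; LY; LY; LXinv])].
Definition z0O : posLaurent := [:: (1%N, [:: LYinv; LYinv; LXinv; LY]);
  (1%N, [:: LYinv; LX; LYinv; LXinv; LY])].
Definition z20O : posLaurent := [:: (1%N, [:: LYinv; LYinv; LXinv; LY]);
  (1%N, [:: LYinv; LX; LYinv; LXinv; LY])].
Definition e0O : posLaurent := [:: (1%N, [:: LYinv; LXinv; LY])].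
Section Alg.
Variable A : unitRingType.
Implicit Types a b c d e f z g q : A.

Lemma exp4 a : a ^+ 4 = a * a * a * a.
Proof. by rewrite !exprS expr0 mulr1 !mulrA. Qed.

Lemma unitQ a b : a \is a GRing.unit -> b \is a GRing.unit ->
  a * b^-1 * a^-1 * b \is a GRing.unit.
Proof. by move=> ua ub; rewrite !unitrMl ?unitrV. Qed.
Arguments unitQ [a b].

Lemma invQ a b : a \is a GRing.unit -> b \is a GRing.unit ->
  (a * b^-1 * a^-1 * b)^-1 = b^-1 * a * b * a^-1.
Proof.
move=> ua ub; have uQ := unitQ ua ub; apply: (mulrI uQ); rewrite divrr //.
by rewrite !mulrA (mulrK ub) (mulrVK ua) (mulrVK ub) (mulrV ua).
Qed.

Lemma cons_step a b c f : a \is a GRing.unit -> b \is a GRing.unit -> c \is a GRing.unit ->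
  f * b = b * f -> c * b^-1 * a * b = f -> b * c^-1 * b^-1 * c = a * b^-1 * a^-1 * b.
Proof.
move=> ua ub uc fb h.
have hc : c = f * b^-1 * a^-1 * b.
  by rewrite -h (mulrK ub) (mulrK ua) (mulrVK ub).
have uf : f \is a GRing.unit.
  by rewrite -h !unitrMl ?unitrV.
have fbi : f^-1 * b^-1 = b^-1 * f^-1 by rewrite -!invrM // fb.
have hci : c^-1 = b^-1 * a * b * f^-1.
  apply: (@mulrI _ _ uc); rewrite divrr // {1}hc !mulrA (mulrK ub) (mulrVK ua) (mulrVK ub) divrr //.
by rewrite hci hc !mulrA (mulrV ub) mul1r -(mulrA _ f^-1) fbi mulrA (mulrVK uf) (mulrK ub).
Qed.

Lemma fwd_step a b c f : a \is a GRing.unit -> b \is a GRing.unit ->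
  c * b^-1 * a * b = f -> c = f * a^-1 * (a * b^-1 * a^-1 * b).
Proof.
move=> ua ub h; rewrite !mulrA (mulrVK ua).
by rewrite -h (mulrK ub) (mulrK ua) (mulrVK ub).
Qed.

Lemma bwd_step a b c f : b \is a GRing.unit -> c \is a GRing.unit ->
  f * b = b * f -> c * b^-1 * a * b = f -> a = (b * c^-1 * b^-1 * c) * c^-1 * f.
Proof.
move=> ub uc fb h.
have fbi : b^-1 * f = f * b^-1.
  by apply: (@mulrI _ _ ub); rewrite mulVKr // mulrA -fb mulrK.
rewrite (mulrK uc) -mulrA fbi -h !mulrA (mulrK ub) (mulrVK uc).
by rewrite (mulrV ub) mul1r.
Qed.

Lemma odd_step a b c : a \is a GRing.unit -> b \is a GRing.unit ->
  c * b^-1 * a * b = 1 + b -> b = c * (a * b^-1 * a^-1 * b)^-1 * a - 1.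
Proof.
move=> ua ub h; rewrite invQ // !mulrA (mulrVK ua) h.
by rewrite addrC addKr.
Qed.
Lemma A_ident z a b c d q :
  b \is a GRing.unit -> c \is a GRing.unit ->
  d = (1 + c) * b^-1 * q -> z = q * b^-1 * (1 + a) -> a = q * c^-1 * (1 + b ^+ 4) ->
  q = b * c^-1 * b^-1 * c ->
  b * (d * c^-1 * d + c^-1 * b * b * q) = d + z * q.
Proof. move=> ub uc hd hz ha hq; rewrite hz ha hd hq; nc_ring. Qed.
Lemma B_ident b c d e f q :
  c \is a GRing.unit -> d \is a GRing.unit ->
  f = (1 + e) * d^-1 * q -> e = (1 + d ^+ 4) * c^-1 * q -> b = q * d^-1 * (1 + c) ->
  q = c * d^-1 * c^-1 * d ->
  d * (d * c^-1 * d + c^-1 * b * b * q) = f + b * q.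
Proof. move=> uc ud hf he hb hq; rewrite hf he hb hq; nc_ring. Qed.
End Alg.
Arguments cons_step {A} [a b c f].
Arguments fwd_step {A} [a b c f].
Arguments bwd_step {A} [a b c f].
Arguments odd_step {A} [a b c].
Arguments A_ident {A} [z a b c d q].
Arguments B_ident {A} [b c d e f q].
Lemma int_ind2 (P : int -> Prop) : P 0 -> (forall n : int, P n <-> P (n + 1)) -> forall n, P n.
Proof.
move=> P0 HS; case=> k.
- elim: k => // k IH; rewrite intS addrC; exact: (proj1 (HS _) IH).
- rewrite NegzE; elim: k => [|k IH].
    by apply: (proj2 (HS _)); rewrite addNr.
  apply: (proj2 (HS _)); rewrite (_ : - (k.+2)%:Z + 1 = - (k.+1)%:Z) //.
  by rewrite (intS k.+1); nc_ring.
Qed.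

Definition good {A : unitRingType} (R : int -> A) : Prop :=
  [/\ forall k, R k \is a GRing.unit,
      forall k : int, R (2 * k) * (R (2 * k - 1))^-1 * R (2 * k - 2) * R (2 * k - 1) = 1 + R (2 * k - 1) &
      forall k : int, R (2 * k + 1) * (R (2 * k))^-1 * R (2 * k - 1) * R (2 * k) = 1 + R (2 * k) ^+ 4].

Definition Qk {A : unitRingType} (R : int -> A) (k : int) :=
  R k * (R (k + 1))^-1 * (R k)^-1 * R (k + 1).
Definition Wf {A : unitRingType} (R : int -> A) (n : int) :=
  R (2 * n + 2) * (R (2 * n + 1))^-1 * R (2 * n + 2) + (R (2 * n + 1))^-1 * R (2 * n) * R (2 * n) * Qk R 0.

Lemma good_shift (A : unitRingType) (R : int -> A) (t : int) :
  good R -> good (fun j => R (2 * t + j)).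
Proof.
case=> Hu He Ho; split => [k|k|k].
- exact: Hu.
- have := He (t + k).
  have -> : 2 * t + 2 * k = 2 * (t + k) by nc_ring.
  have -> : 2 * t + (2 * k - 1) = 2 * (t + k) - 1 by nc_ring.
  have -> : 2 * t + (2 * k - 2) = 2 * (t + k) - 2 by nc_ring.
  exact: id.
- have := Ho (t + k).
  have -> : 2 * t + 2 * k = 2 * (t + k) by nc_ring.
  have -> : 2 * t + (2 * k - 1) = 2 * (t + k) - 1 by nc_ring.
  have -> : 2 * t + (2 * k + 1) = 2 * (t + k) + 1 by nc_ring.
  exact: id.
Qed.

Arguments good_shift {A R} t.

Section Seq.
Variables (A : unitRingType) (R : int -> A).
Hypothesis HR : good R.
Let Hu : forall k, R k \is a GRing.unit. Proof. by case: HR. Qed.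
Let He : forall k : int, R (2 * k) * (R (2 * k - 1))^-1 * R (2 * k - 2) * R (2 * k - 1) = 1 + R (2 * k - 1).
Proof. by case: HR. Qed.
Let Ho : forall k : int, R (2 * k + 1) * (R (2 * k))^-1 * R (2 * k - 1) * R (2 * k) = 1 + R (2 * k) ^+ 4.
Proof. by case: HR. Qed.

Let He' (k a b c : int) : a = 2 * k -> b = 2 * k - 1 -> c = 2 * k - 2 ->
  R a * (R b)^-1 * R c * R b = 1 + R b.
Proof. by move=> -> -> ->; apply: He. Qed.
Let Ho' (k a b c : int) : a = 2 * k + 1 -> b = 2 * k -> c = 2 * k - 1 ->
  R a * (R b)^-1 * R c * R b = 1 + R b ^+ 4.
Proof. by move=> -> -> ->; apply: Ho. Qed.
Let e0 : R 0 * (R (-1))^-1 * R (-2) * R (-1) = 1 + R (-1).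
Proof. by apply: (He' 0). Qed.
Let e1 : R 2 * (R 1)^-1 * R 0 * R 1 = 1 + R 1.
Proof. by apply: (He' 1). Qed.
Let e2 : R 4 * (R 3)^-1 * R 2 * R 3 = 1 + R 3.
Proof. by apply: (He' 2). Qed.
Let o0 : R 1 * (R 0)^-1 * R (-1) * R 0 = 1 + R 0 ^+ 4.
Proof. by apply: (Ho' 0). Qed.
Let o1 : R 3 * (R 2)^-1 * R 1 * R 2 = 1 + R 2 ^+ 4.
Proof. by apply: (Ho' 1). Qed.

Let comm1 (b : A) : (1 + b) * b = b * (1 + b). Proof. nc_ring. Qed.
Let comm4 (b : A) : (1 + b ^+ 4) * b = b * (1 + b ^+ 4). Proof. nc_ring. Qed.

Lemma Qm1 : Qk R (-1) = Qk R 0.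
Proof. by symmetry; apply: (cons_step (Hu _) (Hu _) (Hu _) (comm4 _) o0). Qed.
Lemma Q1 : Qk R 1 = Qk R 0.
Proof. by apply: (cons_step (Hu _) (Hu _) (Hu _) (comm1 _) e1). Qed.
Lemma Q2 : Qk R 2 = Qk R 0.
Proof. by rewrite -Q1; apply: (cons_step (Hu _) (Hu _) (Hu _) (comm4 _) o1). Qed.

Local Notation Q := (Qk R 0).
Lemma f_r2 : R 2 = (1 + R 1) * (R 0)^-1 * Q.
Proof. exact: (fwd_step (Hu _) (Hu _) e1). Qed.
Lemma f_r1 : R 1 = (1 + R 0 ^+ 4) * (R (-1))^-1 * Q.
Proof. by rewrite -Qm1; exact: (fwd_step (Hu _) (Hu _) o0). Qed.
Lemma f_r3 : R 3 = (1 + R 2 ^+ 4) * (R 1)^-1 * Q.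
Proof. by rewrite -Q1; exact: (fwd_step (Hu _) (Hu _) o1). Qed.
Lemma f_r4 : R 4 = (1 + R 3) * (R 2)^-1 * Q.
Proof. by rewrite -Q2; exact: (fwd_step (Hu _) (Hu _) e2). Qed.
Lemma f_rm2 : R (-2) = Q * (R 0)^-1 * (1 + R (-1)).
Proof. by rewrite -Qm1; exact: (bwd_step (Hu _) (Hu _) (comm1 _) e0). Qed.
Lemma f_rm1 : R (-1) = Q * (R 1)^-1 * (1 + R 0 ^+ 4).
Proof. exact: (bwd_step (Hu _) (Hu _) (comm4 _) o0). Qed.
Lemma f_r0 : R 0 = Q * (R 2)^-1 * (1 + R 1).
Proof. by rewrite -Q1; exact: (bwd_step (Hu _) (Hu _) (comm1 _) e1). Qed.
Lemma f_odd : R 1 = R 2 * Q^-1 * R 0 - 1.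
Proof. exact: (odd_step (Hu _) (Hu _) e1). Qed.

Lemma A0 : R 0 * Wf R 0 = R 2 + R (-2) * Q.
Proof.
apply: (A_ident (Hu _) (Hu _) f_r2 f_rm2 f_rm1) => //.
Qed.
Lemma B0 : R 2 * Wf R 0 = R 4 + R 0 * Q.
Proof.
apply: (B_ident (Hu _) (Hu _) f_r4 f_r3 f_r0).
by rewrite -[LHS]Q1.
Qed.
End Seq.
Arguments Qm1 {A R}.
Arguments Q1 {A R}.
Arguments Q2 {A R}.
Arguments f_r2 {A R}.
Arguments f_r1 {A R}.
Arguments f_r3 {A R}.
Arguments f_r4 {A R}.
Arguments f_rm2 {A R}.
Arguments f_rm1 {A R}.
Arguments f_r0 {A R}.
Arguments f_odd {A R}.
Arguments A0 {A R}.
Arguments B0 {A R}.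
Section Glob.
Variables (A : unitRingType) (R : int -> A).
Hypothesis HR : good R.
Let Hu : forall k, R k \is a GRing.unit. Proof. by case: HR. Qed.

Lemma Qeven n : Qk R (2 * n) = Qk R 0.
Proof.
move: n; apply: int_ind2 => // n.
have h : R (2 * n + 2) * (R (2 * n + 3))^-1 * (R (2 * n + 2))^-1 * R (2 * n + 3)
       = R (2 * n + 0) * (R (2 * n + 1))^-1 * (R (2 * n + 0))^-1 * R (2 * n + 1)
  := Q2 (good_shift n HR).
rewrite addr0 in h.
have e : Qk R (2 * (n + 1)) = Qk R (2 * n).
  rewrite /Qk; have -> : 2 * (n + 1) = 2 * n + 2 by nc_ring.
  have -> : 2 * n + 2 + 1 = 2 * n + 3 by nc_ring.
  exact: h.
by rewrite e.
Qed.

Lemma Qeven' n : R (2 * n) * (R (2 * n + 1))^-1 * (R (2 * n))^-1 * R (2 * n + 1) = Qk R 0.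
Proof. exact: Qeven. Qed.

Lemma Wa n : R (2 * n) * Wf R n = R (2 * n + 2) + R (2 * n - 2) * Qk R 0.
Proof.
have h : R (2 * n + 0) * (R (2 * n + 2) * (R (2 * n + 1))^-1 * R (2 * n + 2)
   + (R (2 * n + 1))^-1 * R (2 * n + 0) * R (2 * n + 0) *
     (R (2 * n + 0) * (R (2 * n + 1))^-1 * (R (2 * n + 0))^-1 * R (2 * n + 1)))
   = R (2 * n + 2) + R (2 * n - 2) *
     (R (2 * n + 0) * (R (2 * n + 1))^-1 * (R (2 * n + 0))^-1 * R (2 * n + 1))
  := A0 (good_shift n HR).
by rewrite addr0 Qeven' in h.
Qed.

Lemma Wb n : R (2 * n + 2) * Wf R n = R (2 * n + 4) + R (2 * n) * Qk R 0.
Proof.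
have h : R (2 * n + 2) * (R (2 * n + 2) * (R (2 * n + 1))^-1 * R (2 * n + 2)
   + (R (2 * n + 1))^-1 * R (2 * n + 0) * R (2 * n + 0) *
     (R (2 * n + 0) * (R (2 * n + 1))^-1 * (R (2 * n + 0))^-1 * R (2 * n + 1)))
   = R (2 * n + 4) + R (2 * n + 0) *
     (R (2 * n + 0) * (R (2 * n + 1))^-1 * (R (2 * n + 0))^-1 * R (2 * n + 1))
  := B0 (good_shift n HR).
by rewrite addr0 Qeven' in h.
Qed.

Lemma Wconst n : Wf R n = Wf R 0.
Proof.
move: n; apply: int_ind2 => // n.
have e : Wf R (n + 1) = Wf R n.
  apply: (mulrI (Hu (2 * n + 2))).
  have := Wa (n + 1).
  have -> : 2 * (n + 1) = 2 * n + 2 by nc_ring.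
  have -> : 2 * n + 2 + 2 = 2 * n + 4 by nc_ring.
  have -> : 2 * n + 2 - 2 = 2 * n by nc_ring.
  by move=> ->; rewrite Wb.
by rewrite e.
Qed.

Lemma right_rec n : R (2 * n + 4) = R (2 * n + 2) * Wf R 0 - R (2 * n) * Qk R 0.
Proof. by rewrite -(Wconst n) Wb addrK. Qed.

Lemma odd_rec n : R (2 * n + 1) = R (2 * n + 2) * (Qk R 0)^-1 * R (2 * n) - 1.
Proof.
have h : R (2 * n + 1) = R (2 * n + 2) * (R (2 * n + 0) * (R (2 * n + 1))^-1 * (R (2 * n + 0))^-1 * R (2 * n + 1))^-1 * R (2 * n + 0) - 1
  := f_odd (good_shift n HR).
by rewrite addr0 Qeven' in h.
Qed.
End Glob.
Arguments Qeven {A R}.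
Arguments Qeven' {A R}.
Arguments Wa {A R}.
Arguments Wb {A R}.
Arguments Wconst {A R}.
Arguments right_rec {A R}.
Arguments odd_rec {A R}.
Lemma good_rev (A : unitRingType) (R : int -> A) :
  good R -> good (fun j => (R (- j) : A^c)).
Proof.
case=> Hu He Ho; split => [k|k|k].
- exact: Hu.
- have E := He (1 - k).
  have e1 : 2 * (1 - k) = - (2 * k - 2) by nc_ring.
  have e2 : 2 * (1 - k) - 1 = - (2 * k - 1) by nc_ring.
  have e3 : 2 * (1 - k) - 2 = - (2 * k) by nc_ring.
  rewrite e3 e2 e1 in E.
  have h : R (- (2 * k - 1)) * (R (- (2 * k - 2)) * ((R (- (2 * k - 1)))^-1 * R (- (2 * k))))
           = 1 + R (- (2 * k - 1)).
    have uY := Hu (- (2 * k - 1)).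
    rewrite (_ : R (- (2 * k - 1)) * (R (- (2 * k - 2)) * ((R (- (2 * k - 1)))^-1 * R (- (2 * k))))
      = R (- (2 * k - 1)) * (R (- (2 * k - 2)) * (R (- (2 * k - 1)))^-1 * R (- (2 * k)) * R (- (2 * k - 1))) * (R (- (2 * k - 1)))^-1); last by nc_ring.
    rewrite E; nc_ring.
  exact: h.
- have E := Ho (- k).
  have e1 : 2 * (- k) + 1 = - (2 * k - 1) by nc_ring.
  have e2 : 2 * (- k) - 1 = - (2 * k + 1) by nc_ring.
  have e3 : 2 * (- k) = - (2 * k) by nc_ring.
  rewrite e1 e2 e3 in E.
  have h : R (- (2 * k)) * (R (- (2 * k - 1)) * ((R (- (2 * k)))^-1 * R (- (2 * k + 1))))
           = 1 + R (- (2 * k)) ^+ 4.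
    have uX := Hu (- (2 * k)).
    rewrite (_ : R (- (2 * k)) * (R (- (2 * k - 1)) * ((R (- (2 * k)))^-1 * R (- (2 * k + 1))))
      = R (- (2 * k)) * (R (- (2 * k - 1)) * (R (- (2 * k)))^-1 * R (- (2 * k + 1)) * R (- (2 * k))) * (R (- (2 * k)))^-1); last by nc_ring.
    rewrite E; nc_ring.
  rewrite revrX; exact: h.
Qed.
Arguments good_rev {A R}.
Definition WLm {A : unitRingType} (R : int -> A) :=
  R (-2) * (R (-1))^-1 * R (-2) + Qk R 0 * R 0 * R 0 * (R (-1))^-1.
Definition WL0 {A : unitRingType} (R : int -> A) :=
  R 0 * (R 1)^-1 * R 0 + Qk R 0 * R 2 * R 2 * (R 1)^-1.

Section Left.
Variables (A : unitRingType) (R : int -> A).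
Hypothesis HR : good R.
Let Hu : forall k, R k \is a GRing.unit. Proof. by case: HR. Qed.
Let HS := good_rev HR.

Let hqs : R (-1) * ((R 0)^-1 * ((R (-1))^-1 * R 0)) = Qk R 0.
Proof.
rewrite -(Qm1 HR).
change (Qk R (-1)) with (R (-1) * (R 0)^-1 * (R (-1))^-1 * R 0).
have u0 := Hu 0; have u1 := Hu (-1); nc_ring.
Qed.

Lemma left_rec n :
  R (2 * n + 4) = (Qk R 0)^-1 * WLm R * R (2 * n + 2) - (Qk R 0)^-1 * R (2 * n).
Proof.
have h : R (- (2 * (- n - 2) + 4)) =
   (R (-2) * ((R (-1))^-1 * R (-2)) +
    R (-1) * ((R 0)^-1 * ((R (-1))^-1 * R 0)) * (R 0 * (R 0 * (R (-1))^-1)))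
   * R (- (2 * (- n - 2) + 2))
   - R (-1) * ((R 0)^-1 * ((R (-1))^-1 * R 0)) * R (- (2 * (- n - 2)))
  := right_rec HS (- n - 2).
have e1 : - (2 * (- n - 2) + 4) = 2 * n by nc_ring.
have e2 : - (2 * (- n - 2) + 2) = 2 * n + 2 by nc_ring.
have e3 : - (2 * (- n - 2)) = 2 * n + 4 by nc_ring.
rewrite e1 e2 e3 hqs in h.
rewrite h /WLm.
have uQ : Qk R 0 \is a GRing.unit by rewrite /Qk !unitrMl ?unitrV.
have u0 := Hu 0; have u1 := Hu (-1).
nc_ring.
Qed.

Lemma WLm0 : WLm R = WL0 R.
Proof.
have h : R 0 * ((R 1)^-1 * R 0) +
    R (-1) * ((R 0)^-1 * ((R (-1))^-1 * R 0)) * (R 2 * (R 2 * (R 1)^-1))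
  = R (-2) * ((R (-1))^-1 * R (-2)) +
    R (-1) * ((R 0)^-1 * ((R (-1))^-1 * R 0)) * (R 0 * (R 0 * (R (-1))^-1))
  := Wconst HS (-1).
rewrite hqs in h.
rewrite /WLm /WL0.
have u0 := Hu 0; have u1 := Hu (-1); have u2 := Hu 1.
rewrite (_ : R (-2) * (R (-1))^-1 * R (-2) + Qk R 0 * R 0 * R 0 * (R (-1))^-1 =
   R (-2) * ((R (-1))^-1 * R (-2)) + Qk R 0 * (R 0 * (R 0 * (R (-1))^-1))); last by nc_ring.
rewrite -h; nc_ring.
Qed.

Lemma Wm1 : R 0 * (R (-1))^-1 * R 0 + (R (-1))^-1 * R (-2) * R (-2) * Qk R 0 = Wf R 0.
Proof. exact: (Wconst HR (-1)). Qed.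
End Left.
Arguments left_rec {A R}.
Arguments WLm0 {A R}.
Arguments Wm1 {A R}.
Fixpoint fseq (sa sd sc sa2 sd2 sc2 sg sQi sY0 sz0 sz20 se0 : posLaurent) (n : nat)
  : posLaurent * posLaurent * posLaurent * posLaurent :=
  match n with
  | 0 => (sY0, sz0, sz20, se0)
  | m.+1 =>
    let: (ys, zs, z2s, es) := fseq sa sd sc sa2 sd2 sc2 sg sQi sY0 sz0 sz20 se0 m in
    (padd (pmul ys sa) zs,
     padd (pmul ys sc) (pmul zs sd),
     padd (pmul sc2 ys) (pmul sd2 z2s),
     padd (padd (padd (padd (pmul (pmul ys (pmul (pmul sc sQi) sa2)) ys)
                            (pmul (pmul ys (pmul sc sQi)) z2s))
                      (pmul (pmul zs sg) ys))
                (pmul (pmul zs (pmul sd sQi)) z2s)) es)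
  end.

Definition Ysyn sa sd sc sa2 sd2 sc2 sg sQi sY0 sz0 sz20 se0 n : posLaurent :=
  let: (ys, zs, z2s, es) := fseq sa sd sc sa2 sd2 sc2 sg sQi sY0 sz0 sz20 se0 n in ys.
Definition Osyn sa sd sc sa2 sd2 sc2 sg sQi sY0 sz0 sz20 se0 n : posLaurent :=
  let: (ys, zs, z2s, es) := fseq sa sd sc sa2 sd2 sc2 sg sQi sY0 sz0 sz20 se0 n in
  padd (pmul (pmul ys (pmul sa sQi)) ys) es.

Section Fwd.
Variables (A : unitRingType) (x y : A).
Local Notation ev := (eval_posLaurent x y).
Variables (Y : nat -> A) (Q W VL : A).
Hypothesis uQ : Q \is a GRing.unit.
Variables (sa sd sc sa2 sd2 sc2 sg sQi sY0 sz0 sz20 se0 : posLaurent).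
Hypotheses (hR : forall n, Y n.+2 = Y n.+1 * W - Y n * Q)
  (hL : forall n, Y n.+2 = VL * Y n.+1 - Q^-1 * Y n)
  (hQi : ev sQi = Q^-1)
  (hW : W = ev sa + ev sd)
  (hc : ev sc = ev sa * ev sd - Q)
  (hVL : VL = ev sa2 + ev sd2)
  (hc2 : ev sc2 = ev sd2 * ev sa2 - Q^-1)
  (hg : ev sg = ev sd * Q^-1 * ev sa2 - Q^-1)
  (hY0 : Y 0 = ev sY0)
  (hz0 : Y 1 - Y 0 * ev sa = ev sz0)
  (hz20 : Y 1 - ev sa2 * Y 0 = ev sz20)
  (he0 : (Y 1 - Y 0 * ev sa) * Q^-1 * Y 0 - 1 = ev se0).

Lemma fwd_inv n :
  let: (ys, zs, z2s, es) := fseq sa sd sc sa2 sd2 sc2 sg sQi sY0 sz0 sz20 se0 n in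
  [/\ Y n = ev ys, Y n.+1 - Y n * ev sa = ev zs, Y n.+1 - ev sa2 * Y n = ev z2s &
      (Y n.+1 - Y n * ev sa) * Q^-1 * Y n - 1 = ev es].
Proof.
elim: n => [|n IH] /=; first by split.
case: (fseq _ _ _ _ _ _ _ _ _ _ _ _ n) IH => [[[ys zs] z2s] es] [h1 h2 h3 h4].
rewrite !ev_padd !ev_pmul hQi -h1 -h2 -h3 -h4.
split.
- nc_ring.
- rewrite hR hW hc; nc_ring.
- rewrite hL hVL hc2; nc_ring.
- rewrite hR hW hc hg; nc_ring.
Qed.

Lemma fwd_main n :
  Y n = ev (Ysyn sa sd sc sa2 sd2 sc2 sg sQi sY0 sz0 sz20 se0 n) /\
  Y n.+1 * Q^-1 * Y n - 1 = ev (Osyn sa sd sc sa2 sd2 sc2 sg sQi sY0 sz0 sz20 se0 n).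
Proof.
have := fwd_inv n; rewrite /Ysyn /Osyn.
case: (fseq _ _ _ _ _ _ _ _ _ _ _ _ n) => [[[ys zs] z2s] es] [h1 h2 h3 h4].
split => //.
rewrite !ev_padd !ev_pmul hQi -h1 -h4; nc_ring.
Qed.
End Fwd.
Definition QiW : posLaurent := [:: (1%N, [:: LYinv; LX; LY; LXinv])].
Definition X0 : posLaurent := [:: (1%N, [:: LX])].
Definition Y0 : posLaurent := [:: (1%N, [:: LY])].

Ltac evsimp := rewrite /eval_posLaurent /eval_word ?big_cons ?big_nil /=.

Definition EY := Ysyn aE dE cE a2E d2E c2E gE QiW X0 z0E z20E [::].
Definition EO := Osyn aE dE cE a2E d2E c2E gE QiW X0 z0E z20E [::].
Definition OY := Ysyn aO dO cO a2O d2O c2O gO QiW Y0 z0O z20O e0O.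
Definition OO := Osyn aO dO cO a2O d2O c2O gO QiW Y0 z0O z20O e0O.

Lemma natidx (n : nat) : 2 * (n.+1)%:Z = 2 * n%:Z + 2.
Proof. rewrite intS; nc_ring. Qed.
Lemma natidx2 (n : nat) : 2 * (n.+2)%:Z = 2 * n%:Z + 4.
Proof. rewrite !intS; nc_ring. Qed.

Section Inst.
Variables (A : unitRingType) (R : int -> A).
Hypothesis HR : good R.
Let Hu : forall k, R k \is a GRing.unit. Proof. by case: HR. Qed.
Let uQ : Qk R 0 \is a GRing.unit. Proof. by rewrite /Qk !unitrMl ?unitrV ?Hu. Qed.
Let Yf := fun n : nat => R (2 * n%:Z).

Let hR : forall n, Yf n.+2 = Yf n.+1 * Wf R 0 - Yf n * Qk R 0.
Proof. by move=> n; rewrite /Yf natidx2 natidx right_rec. Qed.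
Let hL : forall n, Yf n.+2 = ((Qk R 0)^-1 * WL0 R) * Yf n.+1 - (Qk R 0)^-1 * Yf n.
Proof. by move=> n; rewrite /Yf natidx2 natidx (left_rec HR) (WLm0 HR). Qed.
Let hO : forall n, R (2 * n%:Z + 1) = Yf n.+1 * (Qk R 0)^-1 * Yf n - 1.
Proof. by move=> n; rewrite /Yf natidx odd_rec. Qed.

Lemma even_start (n : nat) :
  R (2 * n%:Z) = eval_posLaurent (R 0) (R 1) (EY n) /\
  R (2 * n%:Z + 1) = eval_posLaurent (R 0) (R 1) (EO n).
Proof.
have u0 := Hu 0; have u1 := Hu 1.
have hQ : Qk R 0 = R 0 * (R 1)^-1 * (R 0)^-1 * R 1 by [].
have hr2 := f_r2 HR.
have h : forall n : nat, Yf n = eval_posLaurent (R 0) (R 1) (EY n) /\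
   Yf n.+1 * (Qk R 0)^-1 * Yf n - 1 = eval_posLaurent (R 0) (R 1) (EO n).
  move=> m; apply: (@fwd_main A (R 0) (R 1) Yf (Qk R 0) (Wf R 0) ((Qk R 0)^-1 * WL0 R) uQ
    aE dE cE a2E d2E c2E gE QiW X0 z0E z20E [::] hR hL).
- rewrite hQ invQ //; evsimp; nc_ring.
- change (Wf R 0) with (R 2 * (R 1)^-1 * R 2 + (R 1)^-1 * R 0 * R 0 * Qk R 0).
  rewrite hr2 hQ; evsimp; nc_ring.
- rewrite hQ; evsimp; nc_ring.
- rewrite /WL0 hr2 hQ invQ //; evsimp; nc_ring.
- rewrite hQ invQ //; evsimp; nc_ring.
- rewrite hQ invQ //; evsimp; nc_ring.
- by evsimp; rewrite mulr1 addr0.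
- rewrite /Yf (_ : R (2 * 0%:Z) = R 0) // (_ : R (2 * 1%:Z) = R 2) // hr2 hQ; evsimp; nc_ring.
- rewrite /Yf (_ : R (2 * 0%:Z) = R 0) // (_ : R (2 * 1%:Z) = R 2) // hr2 hQ; evsimp; nc_ring.
- rewrite /Yf (_ : R (2 * 0%:Z) = R 0) // (_ : R (2 * 1%:Z) = R 2) // hr2 hQ invQ //; evsimp; nc_ring.
split; first by case: (h n).
by rewrite hO; case: (h n).
Qed.
End Inst.
Arguments even_start {A R}.
Section Inst2.
Variables (A : unitRingType) (R : int -> A).
Hypothesis HR : good R.
Let Hu : forall k, R k \is a GRing.unit. Proof. by case: HR. Qed.
Let uQ : Qk R 0 \is a GRing.unit. Proof. by rewrite /Qk !unitrMl ?unitrV ?Hu. Qed.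
Let Yf := fun n : nat => R (2 * n%:Z).

Let hR : forall n, Yf n.+2 = Yf n.+1 * Wf R 0 - Yf n * Qk R 0.
Proof. by move=> n; rewrite /Yf natidx2 natidx right_rec. Qed.
Let hL : forall n, Yf n.+2 = ((Qk R 0)^-1 * WLm R) * Yf n.+1 - (Qk R 0)^-1 * Yf n.
Proof. by move=> n; rewrite /Yf natidx2 natidx (left_rec HR). Qed.
Let hO : forall n, R (2 * n%:Z + 1) = Yf n.+1 * (Qk R 0)^-1 * Yf n - 1.
Proof. by move=> n; rewrite /Yf natidx odd_rec. Qed.

Lemma odd_start (n : nat) :
  R (2 * n%:Z) = eval_posLaurent (R (-1)) (R 0) (OY n) /\
  R (2 * n%:Z + 1) = eval_posLaurent (R (-1)) (R 0) (OO n).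
Proof.
have u0 := Hu 0; have u1 := Hu (-1).
have hQ : Qk R 0 = R (-1) * (R 0)^-1 * (R (-1))^-1 * R 0 by rewrite -(Qm1 HR).
have hr2 := f_r2 HR; have hr1 := f_r1 HR; have hrm2 := f_rm2 HR.
have h : forall n : nat, Yf n = eval_posLaurent (R (-1)) (R 0) (OY n) /\
   Yf n.+1 * (Qk R 0)^-1 * Yf n - 1 = eval_posLaurent (R (-1)) (R 0) (OO n).
  move=> m; apply: (@fwd_main A (R (-1)) (R 0) Yf (Qk R 0) (Wf R 0) ((Qk R 0)^-1 * WLm R) uQ
    aO dO cO a2O d2O c2O gO QiW Y0 z0O z20O e0O hR hL).
  - rewrite hQ invQ //; evsimp; nc_ring.
  - rewrite -(Wm1 HR) hrm2 hQ; evsimp; nc_ring.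
  - rewrite hQ; evsimp; nc_ring.
  - rewrite /WLm hrm2 hQ invQ //; evsimp; nc_ring.
  - rewrite hQ invQ //; evsimp; nc_ring.
  - rewrite hQ invQ //; evsimp; nc_ring.
  - by evsimp; rewrite mulr1 addr0.
  - rewrite /Yf (_ : R (2 * 0%:Z) = R 0) // (_ : R (2 * 1%:Z) = R 2) // hr2 hr1 hQ; evsimp; nc_ring.
  - rewrite /Yf (_ : R (2 * 0%:Z) = R 0) // (_ : R (2 * 1%:Z) = R 2) // hr2 hr1 hQ; evsimp; nc_ring.
  - rewrite /Yf (_ : R (2 * 0%:Z) = R 0) // (_ : R (2 * 1%:Z) = R 2) // hr2 hr1 hQ invQ //; evsimp; nc_ring.
split; first by case: (h n).
by rewrite hO; case: (h n).
Qed.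
End Inst2.
Arguments odd_start {A R}.
Definition swapL (l : letter) : letter :=
  match l with LX => LY | LXinv => LYinv | LY => LX | LYinv => LXinv end.
Definition trP (P : posLaurent) : posLaurent :=
  [seq (c.1, rev (map swapL c.2)) | c <- P].

Lemma ev_conv (A : unitRingType) (u v : A) (P : posLaurent) :
  eval_posLaurent (u : A^c) (v : A^c) P = eval_posLaurent v u (trP P).
Proof.
elim: P => [|c P IH]; first by rewrite /eval_posLaurent !big_nil.
rewrite /= /eval_posLaurent !big_cons -/(eval_posLaurent _ _ _) IH /=.
congr (_ *+ _ + _).
rewrite /eval_word rev_prodr -map_rev big_map.
by apply: eq_bigr => -[].
Qed.

Definition PE (N : nat) : posLaurent := if odd N then EO N./2 else EY N./2.
Definition PO (N : nat) : posLaurent := if odd N then OO N./2 else OY N./2.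

Lemma natsplit (N : nat) : (N : int) = 2 * (N./2 : nat)%:Z + (odd N : nat)%:Z.
Proof.
rewrite -[in LHS](odd_double_half N) PoszD -mul2n PoszM addrC.
by [].
Qed.

Lemma even_all (A : unitRingType) (R : int -> A) (HR : good R) (N : nat) :
  R N = eval_posLaurent (R 0) (R 1) (PE N).
Proof.
rewrite /PE {1}natsplit; case: (odd N) => /=.
- by case: (even_start HR N./2).
- by rewrite addr0; case: (even_start HR N./2).
Qed.

Lemma odd_all (A : unitRingType) (R : int -> A) (HR : good R) (N : nat) :
  R N = eval_posLaurent (R (-1)) (R 0) (PO N).
Proof.
rewrite /PO {1}natsplit; case: (odd N) => /=.
- by case: (odd_start HR N./2).
- by rewrite addr0; case: (odd_start HR N./2).
Qed.
Arguments even_all {A R}.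
Arguments odd_all {A R}.
Definition ihalf (i : int) : int := match i with Posz k => Posz k./2 | Negz k => Negz k./2 end.
Definition ipar (i : int) : bool := match i with Posz k => odd k | Negz k => ~~ odd k end.

Lemma ihalfP i : i = 2 * ihalf i + (ipar i : nat)%:Z.
Proof.
case: i => k /=.
- exact: natsplit.
- rewrite !NegzE (intS k) (intS k./2) {1}(natsplit k).
  case: (odd k) => /=.
  + change (Posz 1) with (1 : int); change (Posz 0) with (0 : int); nc_ring.
  + change (Posz 1) with (1 : int); change (Posz 0) with (0 : int); nc_ring.
Qed.

Theorem mainTheorem13 :
  forall n i : int, exists P : posLaurent,
  forall (A : unitRingType) (R : int -> A),
    (forall k, R k \is a GRing.unit) ->
    (forall k : int,
        R (2 * k) * (R (2 * k - 1))^-1 * R (2 * k - 2) * R (2 * k - 1)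
        = 1 + R (2 * k - 1)) ->
    (forall k : int,
        R (2 * k + 1) * (R (2 * k))^-1 * R (2 * k - 1) * R (2 * k)
        = 1 + R (2 * k) ^+ 4) ->
    R n = eval_posLaurent (R i) (R (i + 1)) P.
Proof.
move=> n i.
have hi := ihalfP i.
set m := ihalf i in hi.
case Eb: (ipar i) hi => /= hi.
- change (Posz 1) with (1 : int) in hi.
  case En: (n - 2 * (m + 1)) => [N|N].
  + exists (PO N) => A R Hu He Ho.
    have HR : good R by split.
    have h : R (2 * (m + 1) + N%:Z) =
        eval_posLaurent (R (2 * (m + 1) + -1)) (R (2 * (m + 1) + 0)) (PO N)
      := odd_all (good_shift (m + 1) HR) N.
    have e1 : 2 * (m + 1) + N%:Z = n by rewrite -En; nc_ring.
    have e2 : 2 * (m + 1) + -1 = i by rewrite hi; nc_ring.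
    have e3 : 2 * (m + 1) + 0 = i + 1 by rewrite hi; nc_ring.
    by rewrite -e1 h e2 e3.
  + exists (trP (PE N.+1)) => A R Hu He Ho.
    have HR : good R by split.
    have h : (R (2 * (m + 1) + - (N.+1)%:Z) : A^c) =
        eval_posLaurent (R (2 * (m + 1) + - 0) : A^c) (R (2 * (m + 1) + - 1) : A^c) (PE N.+1)
      := even_all (good_rev (good_shift (m + 1) HR)) N.+1.
    rewrite ev_conv in h.
    have e1 : 2 * (m + 1) + - (N.+1)%:Z = n.
      by rewrite -NegzE -En; nc_ring.
    have e2 : 2 * (m + 1) + - 1 = i by rewrite hi; nc_ring.
    have e3 : 2 * (m + 1) + - 0 = i + 1 by rewrite hi; nc_ring.
    by rewrite -e1 h e2 e3.
- change (Posz 0) with (0 : int) in hi.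
  case En: (n - 2 * m) => [N|N].
  + exists (PE N) => A R Hu He Ho.
    have HR : good R by split.
    have h : R (2 * m + N%:Z) =
        eval_posLaurent (R (2 * m + 0)) (R (2 * m + 1)) (PE N)
      := even_all (good_shift m HR) N.
    have e1 : 2 * m + N%:Z = n by rewrite -En; nc_ring.
    have e2 : 2 * m + 0 = i by rewrite hi; nc_ring.
    have e3 : 2 * m + 1 = i + 1 by rewrite hi; nc_ring.
    by rewrite -e1 h e2 e3.
  + exists (trP (PO N.+1)) => A R Hu He Ho.
    have HR : good R by split.
    have h : (R (2 * m + - (N.+1)%:Z) : A^c) =
        eval_posLaurent (R (2 * m + - (-1)) : A^c) (R (2 * m + - 0) : A^c) (PO N.+1)
      := odd_all (good_rev (good_shift m HR)) N.+1.
    rewrite ev_conv in h.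
    have e1 : 2 * m + - (N.+1)%:Z = n.
      by rewrite -NegzE -En; nc_ring.
    have e2 : 2 * m + - 0 = i by rewrite hi; nc_ring.
    have e3 : 2 * m + - (-1) = i + 1 by rewrite hi; nc_ring.
    by rewrite -e1 h e2 e3.
Qed.
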